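(* Let ${\mathcal R}$ be a similarity relation, $\mu$ a cut value, and $P;\sigma;\mathfrak{d}$ a configuration. If one step of $\mathsf{HOPSU}$ transforms $P;\sigma;\mathfrak{d}$ into $P';\sigma\vartheta;\mathfrak{d}\wedge\mathfrak{d}'$, and $\tau$ is an $({\mathcal R},\mu)$-unifier of $P'$ with degree $\mathfrak{d}''$, then $\vartheta\tau$ is an $({\mathcal R},\mu)$-unifier of $P$ with degree $\mathfrak{d}'\wedge\mathfrak{d}''$.
   Context: Terms: simply typed $\lambda$-terms over disjoint countably infinite sets $\mathcal{V}$ (typed variables) and $\mathcal{F}$ (typed constants), types $\tau::=\delta\mid\tau\to\tau$. Terms are identified modulo $\alpha$, kept $\beta$-normal, and $\eta$-expanded except that arguments of free variables are kept $\eta$-normal (i.e. are bound variables); a term is written $\lambda x_1,\dots,x_n.h(t_1,\dots,t_m)$ with head $h$. Free variables are written $F,G,H,X,Y,\dots$, bound variables $x,y,z,\dots$. A higher-order pattern is a term where every free variable occurrence is applied to a list of pairwise distinct bound variables; all terms in problems and substitutions are higher-order patterns. Substitutions $\sigma$ are type-preserving maps with finite domain $\mathit{Dom}(\sigma)=\{X\mid X\sigma\neq X\}$, applied postfix ($t\sigma$, capture-avoiding, followed by $\beta$-normalization); $\sigma\vartheta$ means first $\sigma$ then $\vartheta$; $\varepsilon$ is the identity; $\varphi|_V$ is the restriction to $V$; $\mathtt{fv}(t)$ is the set of free variables. Fuzzy setting: T-norm $\wedge=\min$. ${\mathcal R}_A$ is a similarity relation (reflexive, symmetric, min-transitive map to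 $[0,1]$) on $\mathcal{F}\cup\mathcal{V}$ with ${\mathcal R}_A(x,y)=0$ for distinct variables, ${\mathcal R}_A(f,g)=0$ for constants of different types, ${\mathcal R}_A(x,f)=0$ for a variable and a constant. It induces ${\mathcal R}$ on terms: on normal forms ${\mathcal R}(a,b)={\mathcal R}_A(a,b)$ for symbols, ${\mathcal R}((t_1\,s_1),(t_2\,s_2))={\mathcal R}(t_1,t_2)\wedge{\mathcal R}(s_1,s_2)$, ${\mathcal R}(\lambda x.t,\lambda y.s)={\mathcal R}(t\{x\mapsto z\},s\{y\mapsto z\})$ for fresh $z$ of the same type, $0$ otherwise. A cut value is $\mu\in(0,1]$. An equation is written $t\simeq^?_{{\mathcal R},\mu}s$; a unification problem is a finite set of equations. A substitution $\sigma$ is an $({\mathcal R},\mu)$-unifier of $\{t_1\simeq^?_{{\mathcal R},\mu}s_1,\dots,t_n\simeq^?_{{\mathcal R},\mu}s_n\}$ with degree $\mathfrak{d}$ if ${\mathcal R}(t_1\sigma,s_1\sigma)\wedge\dots\wedge{\mathcal R}(t_n\sigma,s_n\sigma)=\mathfrak{d}\ge\mu$. Algorithm $\mathsf{HOPSU}$: it works on configurations $P;\sigma;\mathfrak{d}$ ($P$ a problem, $\sigma$ a substitution, $\mathfrak{d}\ge\mu$ a degree) or $\bot$; a step applies one of the following rules to a selected equation ($\uplus$ is disjoint union): (Abs) $\{\lambda x.t\simeq^?\lambda x.s\}\uplus P;\sigma;\mathfrak{d}\leadsto\{t\simeq^?s\}\cup P;\sigma;\mathfrak{d}$. (Dec)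 $\{f(t_1,\dots,t_n)\simeq^?g(s_1,\dots,s_n)\}\uplus P;\sigma;\mathfrak{d}\leadsto\{t_1\simeq^?s_1,\dots,t_n\simeq^?s_n\}\cup P;\sigma;\mathfrak{d}\wedge{\mathcal R}(f,g)$, where $f,g$ are rigid heads, $n\ge0$, and $\mathfrak{d}\wedge{\mathcal R}(f,g)\ge\mu$. (SV) $\{F(x_1,\dots,x_n)\simeq^?F(y_1,\dots,y_n)\}\uplus P;\sigma;\mathfrak{d}\leadsto P\vartheta;\sigma\vartheta;\mathfrak{d}$, where $\{z_1,\dots,z_m\}=\{x_i\mid x_i=y_i\}$ and $\vartheta=\{F\mapsto\lambda x_1,\dots,x_n.H(z_1,\dots,z_m)\}$ with $H$ fresh. (Ori) $\{a(s_1,\dots,s_m)\simeq^?F(x_1,\dots,x_n)\}\uplus P;\sigma;\mathfrak{d}\leadsto\{F(x_1,\dots,x_n)\simeq^?a(s_1,\dots,s_m)\}\cup P;\sigma;\mathfrak{d}$, where $F$ is free and $a$ is a constant or $a\in\{x_1,\dots,x_n\}$. (LF) $\{F(x_1,\dots,x_n)\simeq^?a(s_1,\dots,s_m)\}\uplus P;\sigma;\mathfrak{d}\leadsto P\vartheta;\sigma\vartheta;\mathfrak{d}$, where $F\notin\mathtt{fv}(a(s_1,\dots,s_m))$, $a$ is a constant, a free variable, or in $\{x_1,\dots,x_n\}$, $\mathsf{VarElim}(F(x_1,\dots,x_n),a(s_1,\dots,s_m))=\varphi$, and $\vartheta=\varphi|_V$ with $V=\{F\}\cup\mathtt{fv}(a(s_1,\dots,s_m))$.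 (Fail) $\{t\simeq^?s\}\uplus P;\sigma;\mathfrak{d}\leadsto\bot$ if no other rule applies to the selected equation. $\mathsf{VarElim}(t,s)$ starts from $\{t\simeq^?s\};\varepsilon$ and applies as long as possible: (VE1) $\{F(x_1,\dots,x_n)\simeq^?a(s_1,\dots,s_m)\}\uplus P;\sigma\leadsto\{H_1(x_1,\dots,x_n)\simeq^?s_1,\dots,H_m(x_1,\dots,x_n)\simeq^?s_m\}\cup P;\sigma\vartheta$, where $a$ is a constant or in $\{x_1,\dots,x_n\}$, $\vartheta=\{F\mapsto\lambda x_1,\dots,x_n.a(H_1(x_1,\dots,x_n),\dots,H_m(x_1,\dots,x_n))\}$ with $H_i$ fresh of appropriate types; (VE2) $\{F(x_1,\dots,x_n)\simeq^?G(y_1,\dots,y_m)\}\uplus P;\sigma\leadsto P\vartheta;\sigma\vartheta$, where $\{x_1,\dots,x_n\}\cap\{y_1,\dots,y_m\}=\{z_1,\dots,z_k\}$ and $\vartheta=\{F\mapsto\lambda x_1,\dots,x_n.H(z_1,\dots,z_k),G\mapsto\lambda y_1,\dots,y_m.H(z_1,\dots,z_k)\}$ with $H$ fresh. If it ends in $\emptyset;\varphi$, then $\mathsf{VarElim}(t,s)=\varphi$. *)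

(* Defs.v *)
(* Terms are represented with de Bruijn indices for bound variables (terms are
   taken modulo alpha), in spine form so that they are beta-normal by
   construction; free variables may only be applied to (de Bruijn) bound
   variables (higher-order pattern shape). *)
From Stdlib Require Import Reals List Arith Relations.
Import ListNotations.

Inductive ty : Type :=
| TBase : nat -> ty
| TArr  : ty -> ty -> ty.

Definition ty_eq_dec (A B : ty) : {A = B} + {A <> B}.
Proof. decide equality; apply Nat.eq_dec. Defined.

Fixpoint arrows (As : list ty) (B : ty) : ty :=
  match As with
  | [] => B
  | A :: As' => TArr A (arrows As' B)
  end.

Definition is_base (T : ty) : Prop := exists n, T = TBase n.

Record fvar : Type := FV { fv_name : nat; fv_ty : ty }.
Record cst  : Type := CS { c_name : nat; c_ty : ty }.

Definition fvar_eq_dec (X Y : fvar) : {X = Y} + {X <> Y}.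
Proof. decide equality; first [apply ty_eq_dec | apply Nat.eq_dec]. Defined.

Definition cst_eq_dec (X Y : cst) : {X = Y} + {X <> Y}.
Proof. decide equality; first [apply ty_eq_dec | apply Nat.eq_dec]. Defined.

Inductive rhead : Type :=
| BV  : nat -> rhead
| Cst : cst -> rhead.

Inductive tm : Type :=
| Lam  : ty -> tm -> tm
| Rig  : rhead -> list tm -> tm
| Flex : fvar -> list nat -> tm.

Fixpoint lams (As : list ty) (t : tm) : tm :=
  match As with
  | [] => t
  | A :: As' => Lam A (lams As' t)
  end.

Fixpoint fv (t : tm) : list fvar :=
  match t with
  | Lam _ b => fv b
  | Rig _ ts => (fix fvs (l : list tm) : list fvar :=
                   match l with [] => [] | u :: l' => fv u ++ fvs l' end) ts
  | Flex F _ => [F]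
  end.

Definition up (r : nat -> nat) (i : nat) : nat :=
  match i with 0 => 0 | S k => S (r k) end.

Fixpoint ren (r : nat -> nat) (t : tm) : tm :=
  match t with
  | Lam A b => Lam A (ren (up r) b)
  | Rig h ts =>
      Rig (match h with BV i => BV (r i) | Cst c => Cst c end)
          ((fix rens (l : list tm) : list tm :=
              match l with [] => [] | u :: l' => ren r u :: rens l' end) ts)
  | Flex F xs => Flex F (map r xs)
  end.

Fixpoint strip (k : nat) (t : tm) : tm :=
  match k with
  | 0 => t
  | S k' => match t with Lam _ b => strip k' b | _ => t end
  end.

(* beta-normal form of (lambda x1..xn. b) applied to bound variables ys:
   since the arguments are bound variables this is a renaming *)
Definition inst (u : tm) (ys : list nat) : tm :=
  let n := length ys in
  ren (fun i => if i <? n then nth (n - 1 - i) ys 0 else i - n) (strip n u).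

(* Substitutions: finite association lists (first binding wins);
   variables not bound are mapped to themselves. *)

Definition subst := list (fvar * tm).

Definition eps : subst := [].

Fixpoint lookup (s : subst) (X : fvar) : option tm :=
  match s with
  | [] => None
  | (Y, u) :: s' => if fvar_eq_dec X Y then Some u else lookup s' X
  end.

(* t sigma, followed by beta-normalisation (images are closed, so no capture) *)
Fixpoint app (s : subst) (t : tm) : tm :=
  match t with
  | Lam A b => Lam A (app s b)
  | Rig h ts => Rig h ((fix apps (l : list tm) : list tm :=
                          match l with [] => [] | u :: l' => app s u :: apps l' end) ts)
  | Flex F xs => match lookup s F with
                 | Some u => inst u xs
                 | None => Flex F xs
                 end
  end.

(* composition: sigma theta = first sigma, then theta *)
Definition scomp (s th : subst) : subst :=
  map (fun p => (fst p, app th (snd p))) s ++ th.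

Definition restrict (s : subst) (V : list fvar) : subst :=
  filter (fun p => if in_dec fvar_eq_dec (fst p) V then true else false) s.

Definition subst_vars (s : subst) : list fvar :=
  flat_map (fun p => fst p :: fv (snd p)) s.

(* Equations and problems: an equation t =?_{R,mu} s is a pair (t, s);
   a problem is a finite list of equations (read as a finite set). *)

Definition eqn := (tm * tm)%type.
Definition problem := list eqn.

Definition app_eqn (s : subst) (e : eqn) : eqn := (app s (fst e), app s (snd e)).
Definition app_pb (s : subst) (P : problem) : problem := map (app_eqn s) P.

Definition fv_pb (P : problem) : list fvar :=
  flat_map (fun e => fv (fst e) ++ fv (snd e)) P.

(* Typing: well-typed eta-long (except arguments of free variables, which are
   bound variables) higher-order patterns, in a context of bound variables. *)

Definition rhead_ty (G : list ty) (h : rhead) : option ty :=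
  match h with
  | BV i => nth_error G i
  | Cst c => Some (c_ty c)
  end.

Inductive wt : list ty -> tm -> ty -> Prop :=
| wt_lam G A b B :
    wt (A :: G) b B -> wt G (Lam A b) (TArr A B)
| wt_rig G h ts Cs D :
    rhead_ty G h = Some (arrows Cs D) -> is_base D ->
    Forall2 (wt G) ts Cs -> wt G (Rig h ts) D
| wt_flex G F xs As D :
    fv_ty F = arrows As D -> is_base D ->
    Forall2 (fun x A => nth_error G x = Some A) xs As ->
    NoDup xs -> wt G (Flex F xs) D.

Definition wt_eqn (e : eqn) : Prop :=
  exists G T, wt G (fst e) T /\ wt G (snd e) T.

Definition wt_pb (P : problem) : Prop := Forall wt_eqn P.

Definition wt_subst (s : subst) : Prop :=
  Forall (fun p => wt [] (snd p) (fv_ty (fst p))) s.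

(* R_A restricted to constants; on variables R_A is forced to be the
   equality indicator (reflexivity + R_A(x,y)=0 for distinct variables),
   and R_A(variable, constant) = 0. *)
Definition similarity (sim : cst -> cst -> R) : Prop :=
  (forall f g, (0 <= sim f g <= 1)%R) /\
  (forall f, sim f f = 1%R) /\
  (forall f g, sim f g = sim g f) /\
  (forall f g h, (Rmin (sim f g) (sim g h) <= sim f h)%R) /\
  (forall f g, c_ty f <> c_ty g -> sim f g = 0%R).

Definition Rhead (sim : cst -> cst -> R) (h g : rhead) : R :=
  match h, g with
  | BV i, BV j => if Nat.eq_dec i j then 1%R else 0%R
  | Cst f, Cst g' => sim f g'
  | _, _ => 0%R
  end.

Fixpoint Rtm (sim : cst -> cst -> R) (t s : tm) {struct t} : R :=
  match t, s with
  | Lam A t', Lam B s' => if ty_eq_dec A B then Rtm sim t' s' else 0%R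
  | Rig h ts, Rig g ss =>
      Rmin (Rhead sim h g)
        ((fix Rargs (l1 l2 : list tm) {struct l1} : R :=
            match l1, l2 with
            | [], [] => 1%R
            | u :: l1', v :: l2' => Rmin (Rtm sim u v) (Rargs l1' l2')
            | _, _ => 0%R
            end) ts ss)
  | Flex F xs, Flex G ys =>
      if fvar_eq_dec F G then
        if list_eq_dec Nat.eq_dec xs ys then 1%R else 0%R
      else 0%R
  | _, _ => 0%R
  end.

Fixpoint degree (sim : cst -> cst -> R) (s : subst) (P : problem) : R :=
  match P with
  | [] => 1%R
  | e :: P' => Rmin (Rtm sim (app s (fst e)) (app s (snd e))) (degree sim s P')
  end.

Definition unifier (sim : cst -> cst -> R) (mu : R) (s : subst)
  (P : problem) (d : R) : Prop :=
  degree sim s P = d /\ (mu <= d)%R.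

Fixpoint idx (x : nat) (xs : list nat) : nat :=
  match xs with
  | [] => 0
  | y :: xs' => if Nat.eq_dec x y then 0 else S (idx x xs')
  end.

(* de Bruijn index of the variable x of xs inside lambda xs. _ *)
Definition bidx (xs : list nat) (x : nat) : nat := length xs - 1 - idx x xs.

(* the list of bound-variable arguments x1..xn seen inside lambda x1..xn. _ *)
Definition eta_args (n : nat) : list nat := rev (seq 0 n).

Definition dflt_ty : ty := TBase 0.

Definition ve_state := (problem * subst)%type.

Definition ve_vars (st : ve_state) : list fvar :=
  fv_pb (fst st) ++ subst_vars (snd st).

(* [avoid]: variables of the surrounding HOPSU configuration, which fresh
   variables must also avoid *)
Inductive ve_step (avoid : list fvar) : ve_state -> ve_state -> Prop :=
| VE1 P1 P2 s F xs a a' ss As B Cs D Hs :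
    ((exists c, a = Cst c /\ a' = Cst c /\ c_ty c = arrows Cs D) \/
     (exists j, a = BV j /\ In j xs /\ a' = BV (bidx xs j) /\
                nth (idx j xs) As dflt_ty = arrows Cs D)) ->
    fv_ty F = arrows As B -> length As = length xs ->
    length Cs = length ss ->
    length Hs = length ss -> NoDup Hs ->
    (forall H, In H Hs -> ~ In H (avoid ++ ve_vars (P1 ++ (Flex F xs, Rig a ss) :: P2, s))) ->
    (forall i, i < length Hs -> fv_ty (nth i Hs (FV 0 dflt_ty)) = arrows As (nth i Cs dflt_ty)) ->
    ve_step avoid
      (P1 ++ (Flex F xs, Rig a ss) :: P2, s)
      (combine (map (fun H => Flex H xs) Hs) ss ++ (P1 ++ P2),
       scomp s [(F, lams As (Rig a' (map (fun H => Flex H (eta_args (length xs))) Hs)))])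
| VE2 P1 P2 s F xs G ys zs As B Bs B' H :
    NoDup zs -> (forall z, In z zs <-> In z xs /\ In z ys) ->
    fv_ty F = arrows As B -> length As = length xs ->
    fv_ty G = arrows Bs B' -> length Bs = length ys ->
    ~ In H (avoid ++ ve_vars (P1 ++ (Flex F xs, Flex G ys) :: P2, s)) ->
    fv_ty H = arrows (map (fun z => nth (idx z xs) As dflt_ty) zs) B ->
    let th := [(F, lams As (Flex H (map (bidx xs) zs)));
               (G, lams Bs (Flex H (map (bidx ys) zs)))] in
    ve_step avoid
      (P1 ++ (Flex F xs, Flex G ys) :: P2, s)
      (app_pb th (P1 ++ P2), scomp s th).

Definition var_elim (avoid : list fvar) (t s : tm) (phi : subst) : Prop :=
  clos_refl_trans _ (ve_step avoid) ([(t, s)], eps) ([], phi).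

(* One HOPSU step, labelled with the substitution theta and the degree d'
   contributed by the rule:  P; sigma; d  ~>  P'; sigma theta; d /\ d'.
   (Rules that do not change the substitution have theta = eps, rules that do
   not change the degree have d' = 1.  The Fail rule, leading to bottom, is
   not a transition to a configuration.)
   hopsu_step sim mu P sigma d P' theta d'. *)

Inductive hopsu_step (sim : cst -> cst -> R) (mu : R) :
  problem -> subst -> R -> problem -> subst -> R -> Prop :=
| H_Abs P1 P2 s d A t u :
    hopsu_step sim mu (P1 ++ (Lam A t, Lam A u) :: P2) s d
      ((t, u) :: (P1 ++ P2)) eps 1%R
| H_Dec P1 P2 s d h g ts ss :
    length ts = length ss ->
    (mu <= Rmin d (Rhead sim h g))%R ->
    hopsu_step sim mu (P1 ++ (Rig h ts, Rig g ss) :: P2) s d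
      (combine ts ss ++ (P1 ++ P2)) eps (Rhead sim h g)
| H_SV P1 P2 s d F xs ys zs As B H :
    length xs = length ys ->
    NoDup zs ->
    (forall z, In z zs <-> exists i, i < length xs /\
                  nth i xs 0 = z /\ nth i ys 0 = z) ->
    fv_ty F = arrows As B -> length As = length xs ->
    ~ In H (fv_pb (P1 ++ (Flex F xs, Flex F ys) :: P2) ++ subst_vars s) ->
    fv_ty H = arrows (map (fun z => nth (idx z xs) As dflt_ty) zs) B ->
    let th := [(F, lams As (Flex H (map (bidx xs) zs)))] in
    hopsu_step sim mu (P1 ++ (Flex F xs, Flex F ys) :: P2) s d
      (app_pb th (P1 ++ P2)) th 1%R
| H_Ori P1 P2 s d a ss F xs :
    ((exists c, a = Cst c) \/ (exists j, a = BV j /\ In j xs)) ->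
    hopsu_step sim mu (P1 ++ (Rig a ss, Flex F xs) :: P2) s d
      ((Flex F xs, Rig a ss) :: (P1 ++ P2)) eps 1%R
| H_LF P1 P2 s d F xs u phi :
    ((exists c ss, u = Rig (Cst c) ss) \/
     (exists G ys, u = Flex G ys) \/
     (exists j ss, u = Rig (BV j) ss /\ In j xs)) ->
    ~ In F (fv u) ->
    var_elim (fv_pb (P1 ++ (Flex F xs, u) :: P2) ++ subst_vars s)
             (Flex F xs) u phi ->
    let th := restrict phi (F :: fv u) in
    hopsu_step sim mu (P1 ++ (Flex F xs, u) :: P2) s d
      (app_pb th (P1 ++ P2)) th 1%R.

(* Main.v *)
Require Import Defs.
From Stdlib Require Import Reals List Arith Lia Lra Relations Permutation.
Import ListNotations.
Open Scope R_scope.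
Local Notation app := Defs.app.

Fixpoint tm_ind' (P : tm -> Prop)
  (HL : forall A b, P b -> P (Lam A b))
  (HR : forall h ts, Forall P ts -> P (Rig h ts))
  (HF : forall F xs, P (Flex F xs)) (t : tm) {struct t} : P t :=
  match t with
  | Lam A b => HL A b (tm_ind' P HL HR HF b)
  | Rig h ts => HR h ts ((fix go (l : list tm) : Forall P l :=
        match l with [] => Forall_nil _ | u :: l' => Forall_cons _ (tm_ind' P HL HR HF u) (go l') end) ts)
  | Flex F xs => HF F xs
  end.

Lemma ren_rig r h ts : ren r (Rig h ts) =
  Rig (match h with BV i => BV (r i) | Cst c => Cst c end) (map (ren r) ts).
Proof. simpl; f_equal; induction ts; simpl; congruence. Qed.

Lemma app_rig s h ts : app s (Rig h ts) = Rig h (map (app s) ts).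
Proof. simpl; f_equal; induction ts; simpl; congruence. Qed.

Lemma fv_rig h ts : fv (Rig h ts) = flat_map fv ts.
Proof. simpl; induction ts; simpl; congruence. Qed.

Fixpoint flexes (t : tm) : list (fvar * nat) :=
  match t with
  | Lam _ b => flexes b
  | Rig _ ts => (fix go (l : list tm) := match l with [] => [] | u :: l' => flexes u ++ go l' end) ts
  | Flex F xs => [(F, length xs)]
  end.

Lemma flexes_rig h ts : flexes (Rig h ts) = flat_map flexes ts.
Proof. simpl; induction ts; simpl; congruence. Qed.

Fixpoint bounded (k : nat) (t : tm) : Prop :=
  match t with
  | Lam _ b => bounded (S k) b
  | Rig h ts => (match h with BV i => i < k | Cst _ => True end)%nat /\
      (fix go (l : list tm) := match l with [] => True | u :: l' => bounded k u /\ go l' end) ts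
  | Flex _ xs => Forall (fun x => x < k)%nat xs
  end.

Lemma bounded_rig k h ts : bounded k (Rig h ts) <->
  (match h with BV i => i < k | Cst _ => True end)%nat /\ Forall (bounded k) ts.
Proof.
  simpl. split; intros [H1 H2]; split; auto; clear H1; induction ts; simpl in *; auto.
  - destruct H2; constructor; auto.
  - inversion H2 as [|? ? Ha Hts]; subst; split; [exact Ha | apply IHts; exact Hts].
Qed.

Lemma ren_ext t : forall r1 r2, (forall i, r1 i = r2 i) -> ren r1 t = ren r2 t.
Proof.
  induction t using tm_ind'; intros r1 r2 E.
  - simpl. f_equal. apply IHt. intros [|i]; simpl; auto.
  - rewrite !ren_rig. f_equal. { destruct h; auto. }
    induction H; simpl; auto. f_equal; auto.
  - simpl. f_equal. apply map_ext; auto.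
Qed.

Lemma ren_ren t : forall r1 r2, ren r1 (ren r2 t) = ren (fun i => r1 (r2 i)) t.
Proof.
  induction t using tm_ind'; intros r1 r2.
  - simpl. f_equal. rewrite IHt. apply ren_ext. intros [|i]; simpl; auto.
  - rewrite !ren_rig. f_equal. { destruct h; auto. }
    rewrite map_map. induction H; simpl; auto. f_equal; auto.
  - simpl. f_equal. rewrite map_map. auto.
Qed.

Lemma ren_ext_bounded t : forall k r1 r2, bounded k t ->
  (forall i, (i < k)%nat -> r1 i = r2 i) -> ren r1 t = ren r2 t.
Proof.
  induction t using tm_ind'; intros k r1 r2 Hb E.
  - simpl in *. f_equal. apply (IHt (S k)); auto. intros [|i] Hi; simpl; auto.
    f_equal. apply E. lia.
  - rewrite !ren_rig. apply bounded_rig in Hb. destruct Hb as [Hh Hts]. f_equal.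
    { destruct h; [f_equal; auto|auto]. }
    induction H; simpl; auto. inversion Hts; subst. f_equal; eauto.
  - simpl in *. f_equal. apply map_ext_in. intros a Ha. apply E.
    rewrite Forall_forall in Hb. auto.
Qed.

Lemma bounded_mono t : forall k k', (k <= k')%nat -> bounded k t -> bounded k' t.
Proof.
  induction t using tm_ind'; intros k k' Hk Hb.
  - simpl in *. apply (IHt (S k)); auto. lia.
  - apply bounded_rig in Hb. apply bounded_rig. destruct Hb as [Hh Hts]. split.
    { destruct h; auto. lia. }
    induction H; auto. inversion Hts; subst. constructor; eauto.
  - simpl in *. eapply Forall_impl; [|eauto]. intros; simpl in *; lia.
Qed.

Lemma bounded_strip n : forall t k, bounded k t -> bounded (k + n) (strip n t).
Proof.
  induction n; intros t k Hb; simpl.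
  - rewrite Nat.add_0_r. auto.
  - destruct t; try (eapply bounded_mono; [|eauto]; lia).
    all: simpl in Hb; replace (k + S n)%nat with (S k + n)%nat by lia; auto.
Qed.

Lemma bounded_ren t : forall m k r, bounded m t -> (forall i, (i < m)%nat -> (r i < k)%nat) ->
  bounded k (ren r t).
Proof.
  induction t using tm_ind'; intros m k r Hb E.
  - simpl in *. apply (IHt (S m)); auto. intros [|i] Hi; simpl; try lia.
    specialize (E i). lia.
  - rewrite ren_rig. apply bounded_rig in Hb. apply bounded_rig. destruct Hb as [Hh Hts]. split.
    { destruct h; auto. }
    induction H; simpl; auto. inversion Hts; subst. constructor; eauto.
  - simpl in *. rewrite Forall_forall in *. intros x Hx. apply in_map_iff in Hx.
    destruct Hx as [y [<- Hy]]. auto.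
Qed.

Lemma bounded_lams As : forall w k, bounded (k + length As) w -> bounded k (lams As w).
Proof.
  induction As; intros w k Hb; simpl in *.
  - rewrite Nat.add_0_r in Hb; auto.
  - apply IHAs. replace (S k + length As)%nat with (k + S (length As))%nat by lia. auto.
Qed.

Lemma strip_lams As w : strip (length As) (lams As w) = w.
Proof. induction As; simpl; auto. Qed.

Lemma app_lams s As w : app s (lams As w) = lams As (app s w).
Proof. induction As; simpl; congruence. Qed.

Lemma app_nil t : app [] t = t.
Proof.
  induction t using tm_ind'; simpl; auto.
  - congruence.
  - f_equal. induction H; simpl; congruence.
Qed.

Lemma lookup_scomp s th X : lookup (scomp s th) X =
  match lookup s X with Some u => Some (app th u) | None => lookup th X end.
Proof.
  unfold scomp. induction s as [|[Y u] s IH]; simpl; auto.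
  destruct (fvar_eq_dec X Y); auto.
Qed.

Lemma lookup_In s X v : lookup s X = Some v -> In (X, v) s.
Proof.
  induction s as [|[Y u] s IH]; simpl; try discriminate.
  destruct (fvar_eq_dec X Y); intros H; [inversion H; subst; auto | auto].
Qed.

Definition closed_imgs (s : subst) : Prop := forall X v, lookup s X = Some v -> bounded 0 v.

Lemma nth_map_lt (f : nat -> nat) l i : (i < length l)%nat -> nth i (map f l) 0%nat = f (nth i l 0%nat).
Proof. intros Hi. rewrite nth_indep with (d' := f 0%nat) by (rewrite length_map; auto). apply map_nth. Qed.

Lemma app_ren tau t : closed_imgs tau -> forall r, app tau (ren r t) = ren r (app tau t).
Proof.
  intros Hc. induction t using tm_ind'; intros r.
  - simpl. f_equal. auto.
  - rewrite ren_rig, !app_rig, ren_rig. f_equal. rewrite !map_map.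
    induction H; simpl; auto. f_equal; auto.
  - simpl. destruct (lookup tau F) as [v|] eqn:E; auto.
    unfold inst. rewrite length_map. rewrite ren_ren.
    apply ren_ext_bounded with (k := length xs).
    + replace (length xs) with (0 + length xs)%nat by lia. apply bounded_strip. eapply Hc; eauto.
    + intros i Hi. assert (Hl: (i <? length xs)%nat = true) by (apply Nat.ltb_lt; auto).
      rewrite Hl. apply nth_map_lt. lia.
Qed.

Definition cond (th : subst) (t : tm) : Prop :=
  Forall (fun p => forall u, lookup th (fst p) = Some u ->
            exists As w, u = lams As w /\ length As = snd p) (flexes t).

Lemma app_scomp th tau t : closed_imgs tau -> cond th t ->
  app (scomp th tau) t = app tau (app th t).
Proof.
  intros Hc. unfold cond. induction t using tm_ind'; intros Hf.
  - simpl in *. f_equal. auto.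
  - rewrite !app_rig. rewrite flexes_rig in Hf. f_equal. rewrite map_map.
    induction H; simpl; auto. simpl in Hf. apply Forall_app in Hf as [H1 H2].
    f_equal; auto.
  - simpl. rewrite lookup_scomp. destruct (lookup th F) as [u|] eqn:E; auto.
    inversion Hf as [|? ? Hp]; subst. destruct (Hp u E) as [As [w [-> Hl]]].
    simpl in Hl. unfold inst. rewrite app_lams. rewrite <- Hl, !strip_lams.
    rewrite app_ren; auto.
Qed.

Lemma flexes_ren t : forall r, flexes (ren r t) = flexes t.
Proof.
  induction t using tm_ind'; intros r.
  - simpl; auto.
  - rewrite ren_rig, !flexes_rig. induction H; simpl; auto. congruence.
  - simpl; rewrite length_map; auto.
Qed.

Lemma flexes_strip n : forall t, flexes (strip n t) = flexes t.
Proof. induction n; intros t; simpl; auto. destruct t; simpl; auto. Qed.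

Lemma fv_ren t : forall r, fv (ren r t) = fv t.
Proof.
  induction t using tm_ind'; intros r.
  - simpl; auto.
  - rewrite ren_rig, !fv_rig. induction H; simpl; auto. congruence.
  - simpl; auto.
Qed.

Lemma fv_strip n : forall t, fv (strip n t) = fv t.
Proof. induction n; intros t; simpl; auto. destruct t; simpl; auto. Qed.

Lemma flexes_inst u xs : flexes (inst u xs) = flexes u.
Proof. unfold inst. rewrite flexes_ren, flexes_strip. auto. Qed.

Lemma fv_inst u xs : fv (inst u xs) = fv u.
Proof. unfold inst. rewrite fv_ren, fv_strip. auto. Qed.

Lemma flexes_app th t p : In p (flexes (app th t)) ->
  In p (flexes t) \/ exists Y u, lookup th Y = Some u /\ In p (flexes u).
Proof.
  induction t using tm_ind'; intros Hp.
  - simpl in *; auto.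
  - rewrite app_rig, flexes_rig in Hp. rewrite flexes_rig.
    induction H; simpl in *; auto. apply in_app_or in Hp as [Hp|Hp].
    + destruct (H Hp) as [?|?]; auto. left; apply in_or_app; auto.
    + destruct (IHForall Hp) as [?|?]; auto. left; apply in_or_app; auto.
  - simpl in *. destruct (lookup th F) as [u|] eqn:E; auto.
    rewrite flexes_inst in Hp. right. eauto.
Qed.

Lemma fv_flexes t X : In X (fv t) <-> exists k, In (X, k) (flexes t).
Proof.
  induction t using tm_ind'.
  - simpl; auto.
  - rewrite fv_rig, flexes_rig. induction H; simpl. { split; [tauto|intros [k []]]. }
    rewrite !in_app_iff, H, IHForall. split.
    + intros [[k Hk]|[k Hk]]; exists k; apply in_or_app; auto.
    + intros [k Hk]; apply in_app_or in Hk as [Hk|Hk]; [left|right]; exists k; auto.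
  - simpl. split. intros [<-|[]]; eauto. intros [k [Hk|[]]]. inversion Hk; auto.
Qed.

Lemma fv_app th t X : In X (fv (app th t)) ->
  In X (fv t) \/ exists Y u, lookup th Y = Some u /\ In X (fv u).
Proof.
  intros H. apply fv_flexes in H as [k Hk]. apply flexes_app in Hk as [Hk|[Y [u [E Hk]]]].
  - left. apply fv_flexes; eauto.
  - right. exists Y, u. split; auto. apply fv_flexes; eauto.
Qed.

Lemma app_ext s1 s2 t : (forall X, In X (fv t) -> lookup s1 X = lookup s2 X) -> app s1 t = app s2 t.
Proof.
  induction t using tm_ind'; intros E.
  - simpl in *; f_equal; auto.
  - rewrite !app_rig. f_equal. rewrite fv_rig in E. induction H; simpl in *; auto.
    f_equal. apply H. intros; apply E; apply in_or_app; auto.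
    apply IHForall. intros; apply E; apply in_or_app; auto.
  - simpl in *; rewrite E; auto.
Qed.

Definition cnt (l : list fvar) (X : fvar) : nat := count_occ fvar_eq_dec l X.

Lemma cnt_app_th th t K : lookup th K = None ->
  (forall Y u, lookup th Y = Some u -> ~ In K (fv u)) ->
  cnt (fv (app th t)) K = cnt (fv t) K.
Proof.
  intros HK Hu. unfold cnt. induction t using tm_ind'.
  - simpl; auto.
  - rewrite app_rig, !fv_rig. induction H; simpl; auto.
    rewrite !count_occ_app. congruence.
  - simpl. destruct (lookup th F) as [u|] eqn:E.
    + rewrite fv_inst. assert (count_occ fvar_eq_dec (fv u) K = 0%nat) as ->.
      { apply count_occ_not_In. eapply Hu; eauto. }
      destruct (fvar_eq_dec F K); auto. subst. congruence.
    + simpl. auto.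
Qed.

Ltac rmin := unfold Rmin in *; repeat (destruct Rle_dec); lra.

Fixpoint Rargs (sim : cst -> cst -> R) (l1 l2 : list tm) : R :=
  match l1, l2 with
  | [], [] => 1
  | u :: l1', v :: l2' => Rmin (Rtm sim u v) (Rargs sim l1' l2')
  | _, _ => 0
  end.

Lemma Rtm_rig sim h g ts ss : Rtm sim (Rig h ts) (Rig g ss) = Rmin (Rhead sim h g) (Rargs sim ts ss).
Proof. simpl. f_equal. revert ss; induction ts; destruct ss; simpl; auto. rewrite IHts; auto. Qed.

Lemma Rtm_refl sim t : (forall f, sim f f = 1) -> Rtm sim t t = 1.
Proof.
  intros Hs. induction t using tm_ind'.
  - simpl. destruct ty_eq_dec; tauto.
  - rewrite Rtm_rig. assert (Rhead sim h h = 1) as ->.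
    { destruct h; simpl; auto. destruct Nat.eq_dec; tauto. }
    assert (Rargs sim ts ts = 1) as ->. { induction H; simpl; auto. rewrite H, IHForall. rmin. }
    rmin.
  - simpl. destruct fvar_eq_dec; [|tauto]. destruct list_eq_dec; tauto.
Qed.

Lemma Rtm_sym sim t : (forall f g, sim f g = sim g f) -> forall s, Rtm sim t s = Rtm sim s t.
Proof.
  intros Hs. induction t using tm_ind'; intros s; destruct s; try reflexivity.
  - simpl. destruct (ty_eq_dec t0 A); destruct (ty_eq_dec A t0); subst; try tauto. auto.
  - rewrite !Rtm_rig.
    assert (Rhead sim h r = Rhead sim r h) as ->.
    { destruct h, r; simpl; auto. destruct (Nat.eq_dec n n0), (Nat.eq_dec n0 n); subst; tauto. }
    f_equal. revert l; induction H; intros l'; destruct l'; simpl; auto. rewrite H, IHForall. auto.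
  - simpl. destruct (fvar_eq_dec F f), (fvar_eq_dec f F); subst; try tauto.
    destruct (list_eq_dec Nat.eq_dec xs l), (list_eq_dec Nat.eq_dec l xs); subst; tauto.
Qed.

Lemma degree_le1 sim s P : degree sim s P <= 1.
Proof. induction P; simpl. lra. pose proof (Rmin_r (Rtm sim (app s (fst a)) (app s (snd a))) (degree sim s P)). lra. Qed.

Lemma degree_app sim s P1 P2 : degree sim s (P1 ++ P2) = Rmin (degree sim s P1) (degree sim s P2).
Proof.
  induction P1; simpl. { pose proof (degree_le1 sim s P2). rmin. }
  rewrite IHP1. rewrite Rmin_assoc. auto.
Qed.

Lemma degree_mid sim s P1 e P2 : degree sim s (P1 ++ e :: P2) =
  Rmin (Rtm sim (app s (fst e)) (app s (snd e))) (degree sim s (P1 ++ P2)).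
Proof.
  rewrite !degree_app. simpl. 
  generalize (degree sim s P1) (degree sim s P2) (Rtm sim (app s (fst e)) (app s (snd e))).
  intros; rmin.
Qed.

Lemma degree_map sim s1 s2 s3 P :
  (forall e, In e P -> app s1 (fst e) = app s2 (app s3 (fst e)) /\ app s1 (snd e) = app s2 (app s3 (snd e))) ->
  degree sim s1 P = degree sim s2 (app_pb s3 P).
Proof.
  induction P; simpl; intros H; auto. destruct (H a) as [E1 E2]; auto.
  rewrite E1, E2, IHP; auto.
Qed.

Lemma degree_combine sim s ts ss : length ts = length ss ->
  degree sim s (combine ts ss) = Rargs sim (map (app s) ts) (map (app s) ss).
Proof. revert ss; induction ts; destruct ss; simpl; intros; auto; try discriminate. rewrite IHts; auto. Qed.

Definition tocc (X : fvar) (k : nat) : Prop :=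
  exists As D, fv_ty X = arrows As D /\ is_base D /\ length As = k.

Lemma arrows_base_inj As : forall As' D D', is_base D -> is_base D' ->
  arrows As D = arrows As' D' -> As = As' /\ D = D'.
Proof.
  induction As; intros As' D D' HD HD' E; destruct As'; simpl in *.
  - auto.
  - destruct HD as [n Hn]; subst; discriminate.
  - destruct HD' as [n Hn]; subst; discriminate.
  - inversion E; subst. destruct (IHAs As' D D') as [-> ->]; auto.
Qed.

Lemma arrows_len_inj As : forall As' B B', length As = length As' ->
  arrows As B = arrows As' B' -> As = As' /\ B = B'.
Proof.
  induction As; intros As' B B' L E; destruct As'; simpl in *; try discriminate; auto.
  inversion E; subst. destruct (IHAs As' B B') as [-> ->]; auto.
Qed.

Lemma tocc_uniq X k1 k2 : tocc X k1 -> tocc X k2 -> k1 = k2.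
Proof.
  intros [As [D [E [B L]]]] [As' [D' [E' [B' L']]]]. rewrite E in E'.
  destruct (arrows_base_inj As As' D D') as [-> _]; auto. congruence.
Qed.

Lemma tocc_len X As D k : fv_ty X = arrows As D -> is_base D -> tocc X k -> length As = k.
Proof.
  intros E B [As' [D' [E' [B' L']]]]. rewrite E in E'.
  destruct (arrows_base_inj As As' D D') as [-> _]; auto.
Qed.

Lemma wt_flexes t : forall G T, wt G t T -> Forall (fun p => tocc (fst p) (snd p)) (flexes t).
Proof.
  induction t using tm_ind'; intros G T Hw;
    inversion Hw as [G0 A0 b0 B0 Hb | G0 h0 ts0 Cs D Hh HD Hf | G0 F0 xs0 As D HF HD Hf Hnd]; subst.
  - simpl. eauto.
  - rewrite flexes_rig. clear Hw Hh. revert Cs Hf. induction H; intros Cs Hf; simpl; auto.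
    inversion Hf; subst. apply Forall_app. split; eauto.
  - simpl. constructor; auto. exists As, T. repeat split; auto. symmetry. eapply Forall2_length; eauto.
Qed.

Lemma wt_bounded t : forall G T, wt G t T -> bounded (length G) t.
Proof.
  induction t using tm_ind'; intros G T Hw;
    inversion Hw as [G0 A0 b0 B0 Hb | G0 h0 ts0 Cs D Hh HD Hf | G0 F0 xs0 As D HF HD Hf Hnd]; subst.
  - simpl. apply (IHt _ _ Hb).
  - apply bounded_rig. split.
    + destruct h; simpl in *; auto. apply nth_error_Some. congruence.
    + clear Hw Hh. revert Cs Hf. induction H; intros Cs Hf; simpl; auto.
      inversion Hf; subst. constructor; eauto.
  - simpl. clear Hnd Hw HF. induction Hf; constructor; auto. apply nth_error_Some. congruence.
Qed.

Lemma wt_subst_closed s : wt_subst s -> closed_imgs s.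
Proof.
  intros Hs X v E. apply lookup_In in E. unfold wt_subst in Hs. rewrite Forall_forall in Hs.
  apply Hs in E. simpl in E. apply wt_bounded in E. auto.
Qed.

Lemma wt_flex_inv G F xs T : wt G (Flex F xs) T -> NoDup xs /\ tocc F (length xs).
Proof.
  intros Hw; inversion Hw; subst. split; auto. exists As, T. repeat split; auto.
  symmetry. eapply Forall2_length; eauto.
Qed.

Lemma cond_of_tocc th t :
  (forall X u, lookup th X = Some u -> exists As D w, fv_ty X = arrows As D /\ is_base D /\ u = lams As w) ->
  Forall (fun p => tocc (fst p) (snd p)) (flexes t) -> cond th t.
Proof.
  intros Hs Ht. unfold cond. eapply Forall_impl; [|exact Ht]. intros [X k] Hk u E; simpl in *.
  destruct (Hs X u E) as [As [D [w [E1 [B ->]]]]]. exists As, w. split; auto.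
  eapply tocc_len; eauto.
Qed.

Definition instf (ys : list nat) (i : nat) : nat :=
  if (i <? length ys)%nat then nth (length ys - 1 - i) ys 0%nat else (i - length ys)%nat.

Lemma inst_eq u ys : inst u ys = ren (instf ys) (strip (length ys) u).
Proof. reflexivity. Qed.

Lemma idx_lt z xs : In z xs -> (idx z xs < length xs)%nat.
Proof.
  induction xs; simpl; intros H; [tauto|]. destruct Nat.eq_dec; [lia|].
  destruct H; [congruence|]. specialize (IHxs H); lia.
Qed.

Lemma nth_idx z xs : In z xs -> nth (idx z xs) xs 0%nat = z.
Proof.
  induction xs; simpl; intros H; [tauto|]. destruct Nat.eq_dec; auto.
  destruct H; [congruence|]. auto.
Qed.

Lemma idx_nth xs i : NoDup xs -> (i < length xs)%nat -> idx (nth i xs 0%nat) xs = i.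
Proof.
  revert i; induction xs; simpl; intros i Hn Hi; [lia|]. inversion Hn; subst.
  destruct i; simpl.
  - destruct Nat.eq_dec; congruence.
  - destruct Nat.eq_dec.
    + exfalso. apply H1. rewrite <- e. apply nth_In. lia.
    + f_equal. apply IHxs; auto. lia.
Qed.

Lemma bidx_lt xs z : In z xs -> (bidx xs z < length xs)%nat.
Proof. intros H. pose proof (idx_lt z xs H). unfold bidx. lia. Qed.

Lemma instf_bidx xs ys z : In z xs -> length ys = length xs ->
  instf ys (bidx xs z) = nth (idx z xs) ys 0%nat.
Proof.
  intros H L. pose proof (idx_lt z xs H). unfold instf, bidx.
  rewrite L. assert (Hl : (length xs - 1 - idx z xs <? length xs)%nat = true) by (apply Nat.ltb_lt; lia).
  rewrite Hl. f_equal. lia.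
Qed.

Lemma instf_eta xs : map (instf xs) (eta_args (length xs)) = xs.
Proof.
  apply nth_ext with (d := 0%nat) (d' := 0%nat).
  - unfold eta_args. rewrite length_map, length_rev, length_seq. auto.
  - intros n Hn. unfold eta_args in *. rewrite length_map, length_rev, length_seq in Hn.
    rewrite nth_map_lt by (rewrite length_rev, length_seq; auto).
    rewrite rev_nth by (rewrite length_seq; auto). rewrite length_seq.
    rewrite seq_nth by lia. simpl. unfold instf.
    assert (Hl : (length xs - S n <? length xs)%nat = true) by (apply Nat.ltb_lt; lia).
    rewrite Hl. f_equal. lia.
Qed.

Lemma inst_lams_flex As xs H zs : length As = length xs -> (forall z, In z zs -> In z xs) ->
  inst (lams As (Flex H (map (bidx xs) zs))) xs = Flex H zs.
Proof.
  intros L Hz. rewrite inst_eq, <- L, strip_lams. simpl. f_equal.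
  rewrite map_map. rewrite <- map_id. apply map_ext_in. intros z Hin.
  rewrite instf_bidx; auto. apply nth_idx; auto.
Qed.

Lemma inst_lams_flex_sv As xs ys H zs : length As = length xs -> length ys = length xs -> NoDup xs ->
  (forall z, In z zs <-> exists i, (i < length xs)%nat /\ nth i xs 0%nat = z /\ nth i ys 0%nat = z) ->
  inst (lams As (Flex H (map (bidx xs) zs))) ys = Flex H zs.
Proof.
  intros L L2 Hn Hz. rewrite inst_eq, L2, <- L, strip_lams. simpl. f_equal.
  rewrite map_map. rewrite <- map_id. apply map_ext_in. intros z Hin.
  destruct (proj1 (Hz z) Hin) as [i [Hi [E1 E2]]].
  assert (In z xs) by (rewrite <- E1; apply nth_In; auto).
  rewrite instf_bidx; auto. rewrite <- E1 at 1. rewrite idx_nth; auto.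
Qed.

Definition SHPV (V : list fvar) (s : subst) := forall X u, In X V -> lookup s X = Some u ->
  exists As D w, fv_ty X = arrows As D /\ is_base D /\ u = lams As w.

Definition flexes_pb (Q : problem) : list (fvar * nat) :=
  flat_map (fun e => flexes (fst e) ++ flexes (snd e)) Q.

Lemma perm_mid {A B : Type} (g : A -> list B) P1 e P2 :
  Permutation (flat_map g (P1 ++ e :: P2)) (g e ++ flat_map g (P1 ++ P2)).
Proof.
  rewrite !flat_map_app. simpl. apply Permutation_app_swap_app.
Qed.

Lemma cnt_mid P1 e P2 X : cnt (fv_pb (P1 ++ e :: P2)) X =
  (cnt (fv (fst e)) X + cnt (fv (snd e)) X + cnt (fv_pb (P1 ++ P2)) X)%nat.
Proof.
  unfold cnt, fv_pb. rewrite (proj1 (Permutation_count_occ fvar_eq_dec _ _) (perm_mid _ P1 e P2)).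
  cbv beta. rewrite !count_occ_app. reflexivity.
Qed.

Lemma in_fv_mid P1 e P2 X : In X (fv_pb (P1 ++ e :: P2)) <->
  In X (fv (fst e)) \/ In X (fv (snd e)) \/ In X (fv_pb (P1 ++ P2)).
Proof.
  unfold fv_pb. split; intros H.
  - apply (Permutation_in _ (perm_mid _ P1 e P2)) in H. rewrite !in_app_iff in H. tauto.
  - apply (Permutation_in _ (Permutation_sym (perm_mid _ P1 e P2))). rewrite !in_app_iff. tauto.
Qed.

Lemma in_flexes_mid P1 e P2 p : In p (flexes_pb (P1 ++ e :: P2)) <->
  In p (flexes (fst e)) \/ In p (flexes (snd e)) \/ In p (flexes_pb (P1 ++ P2)).
Proof.
  unfold flexes_pb. split; intros H.
  - apply (Permutation_in _ (perm_mid _ P1 e P2)) in H. rewrite !in_app_iff in H. tauto.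
  - apply (Permutation_in _ (Permutation_sym (perm_mid _ P1 e P2))). rewrite !in_app_iff. tauto.
Qed.

Lemma in_fv_pb P e X : In e P -> In X (fv (fst e)) \/ In X (fv (snd e)) -> In X (fv_pb P).
Proof. intros He HX. unfold fv_pb. apply in_flat_map. exists e. split; auto. apply in_or_app. tauto. Qed.

Lemma in_flexes_pb P e p : In e P -> In p (flexes (fst e)) \/ In p (flexes (snd e)) -> In p (flexes_pb P).
Proof. intros He HX. unfold flexes_pb. apply in_flat_map. exists e. split; auto. apply in_or_app. tauto. Qed.

Lemma in_fv_pb_inv P X : In X (fv_pb P) -> exists e, In e P /\ (In X (fv (fst e)) \/ In X (fv (snd e))).
Proof. unfold fv_pb. intros H. apply in_flat_map in H as [e [He H]]. exists e. rewrite in_app_iff in H. auto. Qed.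

Lemma in_flexes_pb_inv P p : In p (flexes_pb P) -> exists e, In e P /\ (In p (flexes (fst e)) \/ In p (flexes (snd e))).
Proof. unfold flexes_pb. intros H. apply in_flat_map in H as [e [He H]]. exists e. rewrite in_app_iff in H. auto. Qed.

Definition congr (f : tm -> tm) : Prop :=
  forall h l1 l2, map f l1 = map f l2 -> f (Rig h l1) = f (Rig h l2).

Section VE.
Variable avoid : list fvar.
Variable F0 : fvar.
Variable xs0 : list nat.
Variable u0 : tm.
Definition t0 := Flex F0 xs0.
Definition V := F0 :: fv u0.
Hypothesis HV : incl V avoid.
Hypothesis Htyp : Forall (fun p => tocc (fst p) (snd p)) (flexes t0 ++ flexes u0).

Definition LIN (Q : problem) : Prop :=
  Forall (fun e => exists X xs, fst e = Flex X xs /\ cnt (fv_pb Q) X = 1%nat) Q.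
Definition OCCV (Q : problem) : Prop :=
  forall X k, In (X, k) (flexes_pb Q) -> In X V -> tocc X k.
Definition UNIF (Q : problem) (s : subst) : Prop :=
  forall f, congr f -> Forall (fun e => f (fst e) = f (snd e)) Q -> f (app s t0) = f (app s u0).
Definition INV (st : ve_state) : Prop :=
  LIN (fst st) /\ OCCV (fst st) /\ SHPV V (snd st) /\ UNIF (fst st) (snd st).

Lemma cond_V s t : SHPV V s -> incl (fv t) V ->
  Forall (fun p => tocc (fst p) (snd p)) (flexes t) -> cond s t.
Proof.
  intros Hs Hi Ht. unfold cond. rewrite Forall_forall in *. intros [X k] Hp u E. simpl.
  assert (HX : In X V) by (apply Hi; apply fv_flexes; eauto).
  destruct (Hs X u HX E) as [As [D [w [E1 [B ->]]]]]. exists As, w. split; auto.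
  eapply tocc_len; eauto. apply (Ht _ Hp).
Qed.

Lemma cond_t0 s : SHPV V s -> cond s t0 /\ cond s u0.
Proof.
  intros Hs. pose proof Htyp as Ht. apply Forall_app in Ht as [H1 H2]. split; apply cond_V; auto.
  - intros X [<-|[]]. left; auto.
  - intros X HX. right; auto.
Qed.

Lemma UNIF_step Q s Q' th : UNIF Q s -> closed_imgs th -> SHPV V s ->
  (forall f, congr f -> Forall (fun e => f (fst e) = f (snd e)) Q' ->
     Forall (fun e => f (app th (fst e)) = f (app th (snd e))) Q) ->
  UNIF Q' (scomp s th).
Proof.
  intros HU Hc Hs Hstep f Hf HQ'. destruct (cond_t0 s Hs) as [C1 C2].
  rewrite !app_scomp by auto.
  apply (HU (fun t => f (app th t))).
  - intros h l1 l2 E. rewrite !app_rig. apply Hf. rewrite !map_map. exact E.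
  - apply Hstep; auto.
Qed.

Lemma SHPV_step s th : SHPV V s ->
  (forall X u, In X V -> lookup th X = Some u -> exists As D w, fv_ty X = arrows As D /\ is_base D /\ u = lams As w) ->
  SHPV V (scomp s th).
Proof.
  intros Hs Ht X u HX E. rewrite lookup_scomp in E. destruct (lookup s X) as [v|] eqn:Ev.
  - inversion E; subst. destruct (Hs X v HX Ev) as [As [D [w [E1 [B ->]]]]].
    exists As, D, (app th w). rewrite app_lams. auto.
  - eauto.
Qed.

Lemma lin_sel Q P1 F xs r P2 : Q = P1 ++ (Flex F xs, r) :: P2 -> LIN Q ->
  ~ In F (fv r) /\ ~ In F (fv_pb (P1 ++ P2)).
Proof.
  intros -> HL. unfold LIN in HL. rewrite Forall_forall in HL.
  destruct (HL (Flex F xs, r)) as [X [ys [E C]]]. { apply in_or_app; right; left; auto. }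
  simpl in E. inversion E; subst. rewrite cnt_mid in C. simpl in C.
  unfold cnt in C. simpl in C. destruct fvar_eq_dec; [|tauto].
  split; intros Hin; apply (count_occ_In fvar_eq_dec) in Hin; unfold eqn, problem in *; lia.
Qed.

Lemma app_notin th t : (forall X, In X (fv t) -> lookup th X = None) -> app th t = t.
Proof. intros H. rewrite (app_ext th []). apply app_nil. intros X HX. rewrite H; auto. Qed.


Lemma fv_pb_app P1 P2 : fv_pb (P1 ++ P2) = fv_pb P1 ++ fv_pb P2.
Proof. unfold fv_pb. apply flat_map_app. Qed.

Lemma flexes_pb_app P1 P2 : flexes_pb (P1 ++ P2) = flexes_pb P1 ++ flexes_pb P2.
Proof. unfold flexes_pb. apply flat_map_app. Qed.

Lemma combine_cnt xs (Hs : list fvar) (ss : list tm) X : length Hs = length ss ->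
  cnt (fv_pb (combine (map (fun H => Flex H xs) Hs) ss)) X = (cnt Hs X + cnt (flat_map fv ss) X)%nat.
Proof.
  unfold cnt. revert ss; induction Hs; intros ss L; destruct ss; simpl in *; try discriminate; auto.
  injection L as L. specialize (IHHs ss L). unfold fv_pb in *. simpl.
  rewrite !count_occ_app in *. simpl. destruct fvar_eq_dec; simpl; rewrite IHHs; lia.
Qed.

Lemma combine_in xs (Hs : list fvar) (ss : list tm) e : In e (combine (map (fun H => Flex H xs) Hs) ss) ->
  exists H s, e = (Flex H xs, s) /\ In H Hs /\ In s ss.
Proof.
  destruct e as [x y]. intros Hin. pose proof (in_combine_l _ _ _ _ Hin) as H1.
  pose proof (in_combine_r _ _ _ _ Hin) as H2. apply in_map_iff in H1 as [H [<- HH]]. eauto.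
Qed.

Lemma combine_forall (f : tm -> tm) l1 l2 : length l1 = length l2 ->
  Forall (fun e => f (fst e) = f (snd e)) (combine l1 l2) -> map f l1 = map f l2.
Proof.
  revert l2; induction l1; intros l2 L HF; destruct l2; simpl in *; try discriminate; auto.
  inversion HF; subst. f_equal; auto.
Qed.

Lemma combine_flexes xs (Hs : list fvar) (ss : list tm) p : In p (flexes_pb (combine (map (fun H => Flex H xs) Hs) ss)) ->
  (exists H, In H Hs /\ p = (H, length xs)) \/ In p (flat_map flexes ss).
Proof.
  intros Hp. apply in_flexes_pb_inv in Hp as [e [He Hp]]. apply combine_in in He as [H [s [-> [HH Hs']]]].
  simpl in Hp. destruct Hp as [[<-|[]]|Hp]; [left; eauto|right]. apply in_flat_map; eauto.
Qed.

Lemma step_VE1 P1 P2 s F xs a a' ss As B Cs D Hs :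
    ((exists c, a = Cst c /\ a' = Cst c /\ c_ty c = arrows Cs D) \/
     (exists j, a = BV j /\ In j xs /\ a' = BV (bidx xs j) /\
                nth (idx j xs) As dflt_ty = arrows Cs D)) ->
    fv_ty F = arrows As B -> length As = length xs ->
    length Hs = length ss -> NoDup Hs ->
    (forall H, In H Hs -> ~ In H (avoid ++ ve_vars (P1 ++ (Flex F xs, Rig a ss) :: P2, s))) ->
    INV (P1 ++ (Flex F xs, Rig a ss) :: P2, s) ->
    INV (combine (map (fun H => Flex H xs) Hs) ss ++ (P1 ++ P2),
       scomp s [(F, lams As (Rig a' (map (fun H => Flex H (eta_args (length xs))) Hs)))]).
Proof.
  intros Ha HF HL HHs HND Hfr [HLIN [HOCC [HSH HU]]]. simpl in HLIN, HOCC, HSH, HU.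
  set (Q := P1 ++ (Flex F xs, Rig a ss) :: P2) in *.
  assert (Hfr' : forall H, In H Hs -> ~ In H V /\ ~ In H (fv_pb Q)).
  { intros H HH. specialize (Hfr H HH). unfold ve_vars in Hfr. simpl in Hfr.
    rewrite !in_app_iff in Hfr. split; intros C; apply Hfr; auto. }
  destruct (lin_sel Q P1 F xs (Rig a ss) P2 eq_refl HLIN) as [HFr HFo].
  set (body := Rig a' (map (fun H => Flex H (eta_args (length xs))) Hs)).
  set (th := [(F, lams As body)]).
  assert (Hc : closed_imgs th).
  { intros X v E. unfold th in E. simpl in E. destruct fvar_eq_dec; inversion E; subst.
    apply bounded_lams. simpl. rewrite HL. unfold body. apply bounded_rig. split.
    - destruct Ha as [[c [-> [-> _]]] | [j [-> [Hj [-> _]]]]]; simpl; auto. apply bidx_lt; auto.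
    - rewrite Forall_forall. intros x Hx. apply in_map_iff in Hx as [H [<- _]]. simpl.
      rewrite Forall_forall. intros y Hy. unfold eta_args in Hy. apply in_rev in Hy.
      apply in_seq in Hy. lia. }
  assert (Happ : app th (Flex F xs) = Rig a (map (fun H => Flex H xs) Hs)).
  { unfold th. simpl. destruct (fvar_eq_dec F F); [|tauto]. rewrite inst_eq.
    replace (strip (length xs) (lams As body)) with body by (rewrite <- HL; symmetry; apply strip_lams).
    unfold body. rewrite ren_rig. f_equal.
    - destruct Ha as [[c [-> [-> _]]] | [j [-> [Hj [-> _]]]]]; auto.
      rewrite instf_bidx; auto. rewrite nth_idx; auto.
    - rewrite map_map. apply map_ext. intros H. simpl. f_equal. apply instf_eta. }
  assert (Hid : forall t, ~ In F (fv t) -> app th t = t).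
  { intros t Ht. apply app_notin. intros X HX. unfold th. simpl.
    destruct fvar_eq_dec; subst; tauto. }
  assert (HQ : forall e, In e (P1 ++ P2) -> In e Q).
  { intros e He. unfold Q. apply in_app_or in He as [He|He]; apply in_or_app; simpl; auto. }
  unfold INV; cbn [fst snd]. split; [|split; [|split]].
  -
    unfold LIN. rewrite Forall_forall. intros e' He'. apply in_app_or in He' as [He'|He'].
    + apply combine_in in He' as [H [s' [-> [HH Hs']]]]. exists H, xs. split; auto.
      destruct (Hfr' H HH) as [_ HQH].
      unfold cnt. rewrite fv_pb_app, count_occ_app. fold (cnt (fv_pb (combine (map (fun H => Flex H xs) Hs) ss)) H).
      rewrite combine_cnt by auto. unfold cnt.
      rewrite (proj1 (NoDup_count_occ' fvar_eq_dec Hs) HND H HH).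
      assert (count_occ fvar_eq_dec (flat_map fv ss) H = 0%nat) as ->.
      { apply count_occ_not_In. intros C. apply HQH. unfold Q. apply in_fv_mid. right; left.
        cbn [snd]. rewrite fv_rig. auto. }
      assert (count_occ fvar_eq_dec (fv_pb (P1 ++ P2)) H = 0%nat) as ->.
      { apply count_occ_not_In. intros C. apply HQH. unfold Q. apply in_fv_mid. right; right. auto. }
      lia.
    + unfold LIN in HLIN. rewrite Forall_forall in HLIN.
      destruct (HLIN e' (HQ e' He')) as [X [xs' [E1 C1]]]. exists X, xs'. split; auto.
      assert (HX : In X (fv_pb (P1 ++ P2))) by (apply (in_fv_pb _ e'); auto; left; rewrite E1; simpl; auto).
      assert (HXQ : In X (fv_pb Q)) by (unfold Q; apply in_fv_mid; auto).
      assert (cnt Hs X = 0%nat) as C2.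
      { apply count_occ_not_In. intros C. apply (Hfr' X C). auto. }
      unfold Q in C1. rewrite cnt_mid in C1. cbn [fst snd] in C1. rewrite fv_rig in C1.
      apply (count_occ_In fvar_eq_dec) in HX.
      unfold cnt in *. rewrite fv_pb_app, count_occ_app.
      fold (cnt (fv_pb (combine (map (fun H => Flex H xs) Hs) ss)) X).
      rewrite combine_cnt by auto. unfold cnt in *. unfold eqn, problem in *. lia.
  -
    intros X k Hin HXV. rewrite flexes_pb_app in Hin. apply in_app_or in Hin as [Hin|Hin].
    + apply combine_flexes in Hin as [[H [HH E]]|Hin].
      * inversion E; subst. exfalso. apply (proj1 (Hfr' H HH)). auto.
      * apply HOCC; auto. unfold Q. apply in_flexes_mid. right; left. cbn [snd]. rewrite flexes_rig. auto.
    + apply HOCC; auto. unfold Q. apply in_flexes_mid. auto.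
  -
    apply SHPV_step; auto. intros X u HX E. unfold th in E. simpl in E.
    destruct fvar_eq_dec; [|discriminate]. inversion E; subst.
    assert (Ht : tocc F (length xs)).
    { apply HOCC; auto. unfold Q. apply in_flexes_mid. left. simpl. auto. }
    destruct Ht as [As0 [D0 [E0 [B0 L0]]]].
    destruct (arrows_len_inj As As0 B D0) as [<- <-]; [lia|congruence|].
    exists As, B, body. auto.
  -
    apply (UNIF_step Q s); auto. intros f Hf HQ'. apply Forall_app in HQ' as [Hcomb Hrest].
    assert (Hr : forall e, In e (P1 ++ P2) -> f (app th (fst e)) = f (app th (snd e))).
    { intros e He. rewrite !Hid.
      - rewrite Forall_forall in Hrest. auto.
      - intros C. apply HFo. apply (in_fv_pb _ e); auto.
      - intros C. apply HFo. apply (in_fv_pb _ e); auto. }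
    unfold Q. apply Forall_app. split; [|constructor].
    + rewrite Forall_forall. intros e He. apply Hr. apply in_or_app; auto.
    + cbn [fst snd]. rewrite Happ, (Hid (Rig a ss)) by auto. apply Hf.
      apply combine_forall in Hcomb; [|rewrite length_map; auto]. exact Hcomb.
    + rewrite Forall_forall. intros e He. apply Hr. apply in_or_app; auto.
Qed.


Lemma app_flex_none s X xs : lookup s X = None -> app s (Flex X xs) = Flex X xs.
Proof. intros E. simpl. rewrite E. auto. Qed.

Lemma fv_lams As w : fv (lams As w) = fv w.
Proof. induction As; simpl; auto. Qed.

Lemma flexes_lams As w : flexes (lams As w) = flexes w.
Proof. induction As; simpl; auto. Qed.

Lemma cnt_pb_app_th th P K : lookup th K = None ->
  (forall Y u, lookup th Y = Some u -> ~ In K (fv u)) ->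
  cnt (fv_pb (app_pb th P)) K = cnt (fv_pb P) K.
Proof.
  intros H1 H2. induction P as [|e P IH]; simpl; auto.
  unfold cnt, fv_pb in *. simpl. rewrite !count_occ_app.
  fold (cnt (fv (app th (fst e))) K) (cnt (fv (app th (snd e))) K) (cnt (fv (fst e)) K) (cnt (fv (snd e)) K).
  rewrite !cnt_app_th by auto. rewrite IH. auto.
Qed.

Lemma step_VE2 P1 P2 s F xs G ys zs As B Bs B' H :
    NoDup zs -> (forall z, In z zs <-> In z xs /\ In z ys) ->
    fv_ty F = arrows As B -> length As = length xs ->
    fv_ty G = arrows Bs B' -> length Bs = length ys ->
    ~ In H (avoid ++ ve_vars (P1 ++ (Flex F xs, Flex G ys) :: P2, s)) ->
    INV (P1 ++ (Flex F xs, Flex G ys) :: P2, s) ->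
    INV (app_pb [(F, lams As (Flex H (map (bidx xs) zs)));
               (G, lams Bs (Flex H (map (bidx ys) zs)))] (P1 ++ P2),
         scomp s [(F, lams As (Flex H (map (bidx xs) zs)));
               (G, lams Bs (Flex H (map (bidx ys) zs)))]).
Proof.
  intros Hnd Hz HF HL HG HLG Hfr [HLIN [HOCC [HSH HU]]]. simpl in HLIN, HOCC, HSH, HU.
  set (Q := P1 ++ (Flex F xs, Flex G ys) :: P2) in *.
  assert (HfrV : ~ In H V).
  { intros C. apply Hfr. apply in_or_app. left. apply HV. auto. }
  assert (HfrQ : ~ In H (fv_pb Q)).
  { intros C. apply Hfr. apply in_or_app. right. unfold ve_vars. simpl. apply in_or_app. auto. }
  destruct (lin_sel Q P1 F xs (Flex G ys) P2 eq_refl HLIN) as [HFr HFo].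
  assert (HFG : G <> F) by (intros ->; apply HFr; simpl; auto).
  assert (Hzx : forall z, In z zs -> In z xs) by (intros z Hin; apply Hz in Hin; tauto).
  assert (Hzy : forall z, In z zs -> In z ys) by (intros z Hin; apply Hz in Hin; tauto).
  set (th := [(F, lams As (Flex H (map (bidx xs) zs))); (G, lams Bs (Flex H (map (bidx ys) zs)))]).
  assert (Himg : forall Y u, lookup th Y = Some u -> fv u = [H] /\ flexes u = [(H, length zs)]).
  { intros Y u E. unfold th in E. simpl in E.
    destruct fvar_eq_dec; [inversion E; subst|destruct fvar_eq_dec; inversion E; subst];
    rewrite fv_lams, flexes_lams; simpl; rewrite length_map; auto. }
  assert (Hc : closed_imgs th).
  { intros Y u E. unfold th in E. simpl in E.
    destruct fvar_eq_dec; [inversion E; subst|destruct fvar_eq_dec; inversion E; subst];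
    apply bounded_lams; simpl; rewrite Forall_forall; intros x Hx; apply in_map_iff in Hx as [z [<- Hz']].
    - rewrite HL. apply bidx_lt; auto.
    - rewrite HLG. apply bidx_lt; auto. }
  assert (Happ1 : app th (Flex F xs) = Flex H zs).
  { unfold th. simpl. destruct (fvar_eq_dec F F); [|tauto]. apply inst_lams_flex; auto. }
  assert (Happ2 : app th (Flex G ys) = Flex H zs).
  { unfold th. simpl. destruct (fvar_eq_dec G F); [tauto|]. destruct (fvar_eq_dec G G); [|tauto].
    apply inst_lams_flex; auto. }
  assert (HQ : forall e, In e (P1 ++ P2) -> In e Q).
  { intros e He. unfold Q. apply in_app_or in He as [He|He]; apply in_or_app; simpl; auto. }
  unfold INV; cbn [fst snd]. split; [|split; [|split]].
  -
    unfold LIN. rewrite Forall_forall. intros e' He'. unfold app_pb in He'.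
    apply in_map_iff in He' as [e [<- He]].
    unfold LIN in HLIN. rewrite Forall_forall in HLIN.
    destruct (HLIN e (HQ e He)) as [K [zs' [E1 C1]]].
    assert (HK : In K (fv_pb (P1 ++ P2))) by (apply (in_fv_pb _ e); auto; left; rewrite E1; simpl; auto).
    assert (HKQ : In K (fv_pb Q)) by (unfold Q; apply in_fv_mid; auto).
    unfold Q in C1. rewrite cnt_mid in C1. cbn [fst snd fv] in C1.
    apply (count_occ_In fvar_eq_dec) in HK.
    assert (HKF : K <> F).
    { intros ->. unfold cnt in C1. simpl in C1. destruct fvar_eq_dec; [|tauto].
      unfold eqn, problem in *. lia. }
    assert (HKG : K <> G).
    { intros ->. unfold cnt in C1. simpl in C1. destruct (fvar_eq_dec G G); [|tauto].
      unfold eqn, problem in *. lia. }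
    assert (HKH : K <> H) by (intros ->; auto).
    assert (HlK : lookup th K = None).
    { unfold th. simpl. destruct fvar_eq_dec; [tauto|]. destruct fvar_eq_dec; [tauto|]. auto. }
    exists K, zs'. split.
    + unfold app_eqn. cbn [fst]. rewrite E1. apply app_flex_none. auto.
    + rewrite cnt_pb_app_th; auto.
      * unfold cnt in *. simpl in C1. destruct fvar_eq_dec; [congruence|].
        destruct fvar_eq_dec; [congruence|]. unfold eqn, problem in *. lia.
      * intros Y u E. destruct (Himg Y u E) as [-> _]. intros [C|[]]. auto.
  -
    intros X k Hin HXV. apply in_flexes_pb_inv in Hin as [e' [He' Hin]].
    unfold app_pb in He'. apply in_map_iff in He' as [e [<- He]].
    assert (Hgen : forall t, In (X, k) (flexes (app th t)) -> In (X, k) (flexes t)).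
    { intros t Ht. apply flexes_app in Ht as [Ht|[Y [u [E Ht]]]]; auto.
      destruct (Himg Y u E) as [_ Hf]. rewrite Hf in Ht. destruct Ht as [Ht|[]].
      inversion Ht; subst. tauto. }
    apply HOCC; auto. unfold Q. apply in_flexes_mid. right; right.
    apply (in_flexes_pb _ e); auto. unfold app_eqn in Hin. cbn [fst snd] in Hin.
    destruct Hin as [Hin|Hin]; [left|right]; apply Hgen; auto.
  -
    apply SHPV_step; auto. intros X u HX E. unfold th in E. simpl in E.
    destruct fvar_eq_dec as [->|HXF].
    + inversion E; subst.
      assert (Ht : tocc F (length xs)).
      { apply HOCC; auto. unfold Q. apply in_flexes_mid. left. simpl. auto. }
      destruct Ht as [As0 [D0 [E0 [B0 L0]]]].
      destruct (arrows_len_inj As As0 B D0) as [<- <-]; [lia|congruence|].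
      eexists _, _, _. eauto.
    + destruct fvar_eq_dec as [->|]; [|discriminate]. inversion E; subst.
      assert (Ht : tocc G (length ys)).
      { apply HOCC; auto. unfold Q. apply in_flexes_mid. right; left. simpl. auto. }
      destruct Ht as [As0 [D0 [E0 [B0 L0]]]].
      destruct (arrows_len_inj Bs As0 B' D0) as [<- <-]; [lia|congruence|].
      eexists _, _, _. eauto.
  -
    apply (UNIF_step Q s); auto. intros f Hf HQ'.
    assert (Hr : forall e, In e (P1 ++ P2) -> f (app th (fst e)) = f (app th (snd e))).
    { intros e He. rewrite Forall_forall in HQ'. apply (HQ' (app_eqn th e)).
      unfold app_pb. apply in_map. auto. }
    unfold Q. apply Forall_app. split; [|constructor].
    + rewrite Forall_forall. intros e He. apply Hr. apply in_or_app; auto.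
    + cbn [fst snd]. rewrite Happ1, Happ2. auto.
    + rewrite Forall_forall. intros e He. apply Hr. apply in_or_app; auto.
Qed.


Lemma step_INV x y : ve_step avoid x y -> INV x -> INV y.
Proof.
  intros Hs. destruct Hs.
  - eapply step_VE1; eauto.
  - eapply step_VE2; eauto.
Qed.

Hypothesis HF0 : ~ In F0 (fv u0).

Lemma ve_sound_sec phi : var_elim avoid t0 u0 phi -> app phi t0 = app phi u0 /\ SHPV V phi.
Proof.
  intros Hve. unfold var_elim in Hve. apply clos_rt_rt1n_iff in Hve.
  assert (Hinit : INV ([(t0, u0)], eps)).
  { unfold INV; cbn [fst snd]. split; [|split; [|split]].
    - constructor; auto. exists F0, xs0. split; auto. unfold cnt, fv_pb. simpl.
      destruct fvar_eq_dec; [|tauto]. rewrite app_nil_r, (proj1 (count_occ_not_In _ _ _) HF0). auto.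
    - intros X k Hin _. unfold flexes_pb in Hin. simpl in Hin. rewrite app_nil_r in Hin.
      rewrite Forall_forall in Htyp. apply (Htyp (X, k)). exact Hin.
    - intros X u _ E. discriminate.
    - intros f Hf HQ. unfold eps. rewrite !app_nil. inversion HQ; auto. }
  assert (Hfin : INV ([], phi)).
  { revert Hinit. remember ([(t0, u0)], eps) as x. remember ([] : problem, phi) as z.
    clear Heqx. induction Hve; intros Hi; subst; auto.
    apply IHHve; auto. eapply step_INV; eauto. }
  destruct Hfin as [_ [_ [Hsh HU]]]. cbn [fst snd] in *. split; auto.
  apply (HU (fun t => t)); auto.
  intros h l1 l2 E. rewrite !map_id in E. congruence.
Qed.

End VE.

Lemma ve_sound avoid F xs u phi :
  ~ In F (fv u) ->
  incl (F :: fv u) avoid ->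
  Forall (fun p => tocc (fst p) (snd p)) (flexes (Flex F xs) ++ flexes u) ->
  var_elim avoid (Flex F xs) u phi ->
  app phi (Flex F xs) = app phi u /\ SHPV (F :: fv u) phi.
Proof. intros H1 H2 H3 H4. apply (ve_sound_sec avoid F xs u H2 H3 H1 phi H4). Qed.


Lemma lookup_restrict s V X : lookup (restrict s V) X =
  if in_dec fvar_eq_dec X V then lookup s X else None.
Proof.
  induction s as [|[Y v] s IH]; simpl; [destruct in_dec; auto|].
  destruct (in_dec fvar_eq_dec Y V) eqn:EY; simpl.
  - destruct fvar_eq_dec; subst; auto. rewrite EY. auto.
  - destruct fvar_eq_dec; subst; auto. rewrite IH, EY. auto.
Qed.

Lemma wt_pb_tocc P e : wt_pb P -> In e P ->
  Forall (fun p => tocc (fst p) (snd p)) (flexes (fst e)) /\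
  Forall (fun p => tocc (fst p) (snd p)) (flexes (snd e)).
Proof.
  intros HP He. unfold wt_pb in HP. rewrite Forall_forall in HP.
  destruct (HP e He) as [G [T [H1 H2]]]. split; eapply wt_flexes; eauto.
Qed.

Lemma app_pb_mid th P1 e P2 : app_pb th (P1 ++ e :: P2) = app_pb th P1 ++ app_eqn th e :: app_pb th P2.
Proof. unfold app_pb. rewrite map_app. auto. Qed.

Lemma app_pb_app th P1 P2 : app_pb th (P1 ++ P2) = app_pb th P1 ++ app_pb th P2.
Proof. unfold app_pb. rewrite map_app. auto. Qed.

Lemma subst_case sim mu P1 t u P2 th tau d'' :
  similarity sim -> wt_pb (P1 ++ (t, u) :: P2) -> wt_subst tau ->
  (forall X v, lookup th X = Some v -> exists As D w, fv_ty X = arrows As D /\ is_base D /\ v = lams As w) ->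
  app th t = app th u ->
  unifier sim mu tau (app_pb th (P1 ++ P2)) d'' ->
  unifier sim mu (scomp th tau) (P1 ++ (t, u) :: P2) (Rmin 1 d'').
Proof.
  intros Hsim HP Htau Hsh Heq [Hd Hmu].
  assert (Hle : d'' <= 1) by (rewrite <- Hd; apply degree_le1).
  split; [|rmin].
  rewrite degree_map with (s2 := tau) (s3 := th).
  - rewrite app_pb_mid, degree_mid. simpl. rewrite Heq, Rtm_refl by apply Hsim. rewrite <- Hd, app_pb_app. reflexivity.
  - intros e He. destruct (wt_pb_tocc _ _ HP He) as [H1 H2].
    split; apply app_scomp; try (apply wt_subst_closed; auto); apply cond_of_tocc; auto.
Qed.

Theorem lemma1 (sim : cst -> cst -> R) (mu : R)
  (P : problem) (sigma : subst) (d : R)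
  (P' : problem) (theta : subst) (d' : R)
  (tau : subst) (d'' : R) :
  similarity sim ->
  0 < mu <= 1 ->
  mu <= d <= 1 ->
  wt_pb P -> wt_subst sigma -> wt_subst tau ->
  (* one HOPSU step  P; sigma; d  ~>  P'; sigma theta; d /\ d' *)
  hopsu_step sim mu P sigma d P' theta d' ->
  unifier sim mu tau P' d'' ->
  unifier sim mu (scomp theta tau) P (Rmin d' d'').
Proof.
  intros Hsim Hmu Hd HP Hsig Htau Hstep Hun.
  pose proof Hsim as Hsim'.
  destruct Hsim as [Hs0 [Hs1 [Hs2 [Hs3 Hs4]]]].
  inversion Hstep; subst; pose proof Hun as [Hdeg Hmu''];
  assert (Hle : d'' <= 1) by (rewrite <- Hdeg; apply degree_le1).
  -
    split; [|rmin]. change (scomp eps tau) with tau.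
    rewrite degree_mid. simpl. destruct ty_eq_dec; [|tauto].
    simpl in Hdeg. transitivity d''; [exact Hdeg|rmin].
  -
    split; [|rmin]. change (scomp eps tau) with tau.
    rewrite degree_mid. simpl fst; simpl snd. rewrite !app_rig, Rtm_rig.
    rewrite degree_app, degree_combine in Hdeg by auto. rewrite <- Hdeg. rewrite Rmin_assoc. auto.
  -
    assert (Hin : In (Flex F xs, Flex F ys) (P1 ++ (Flex F xs, Flex F ys) :: P2))
      by (apply in_or_app; right; left; auto).
    unfold wt_pb in HP. pose proof HP as HP0. rewrite Forall_forall in HP.
    destruct (HP _ Hin) as [G [T [Hw1 Hw2]]]. simpl in Hw1.
    apply wt_flex_inv in Hw1 as [Hnd [As0 [D0 [E0 [B0 L0]]]]].
    destruct (arrows_len_inj As As0 B D0) as [<- <-]; [lia|congruence|].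
    apply subst_case; auto.
    + intros X v E. unfold th in E. simpl in E. destruct fvar_eq_dec; [|discriminate].
      inversion E; subst; exists As, B, (Flex H (map (bidx xs) zs)); auto.
    + unfold th. simpl. destruct fvar_eq_dec; [|tauto].
      rewrite (inst_lams_flex_sv As xs ys H zs); auto.
      rewrite inst_lams_flex; auto.
      intros z Hz. apply H2 in Hz as [i [Hi [E1 _]]]. rewrite <- E1. apply nth_In; auto.
  -
    split; [|rmin]. change (scomp eps tau) with tau.
    rewrite degree_mid. simpl fst; simpl snd. rewrite Rtm_sym by auto.
    simpl in Hdeg. transitivity d''; [exact Hdeg|rmin].
  -
    assert (Hin : In (Flex F xs, u) (P1 ++ (Flex F xs, u) :: P2))
      by (apply in_or_app; right; left; auto).
    destruct (wt_pb_tocc _ _ HP Hin) as [T1 T2].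
    assert (Hinc : incl (F :: fv u) (fv_pb (P1 ++ (Flex F xs, u) :: P2) ++ subst_vars sigma)).
    { intros X HX. apply in_or_app. left. unfold fv_pb. apply in_flat_map.
      exists (Flex F xs, u). split; [exact Hin|]. simpl. simpl in HX. destruct HX as [<-|HX]; auto with datatypes. }
    destruct (ve_sound _ F xs u phi H0 Hinc (proj2 (Forall_app _ _ _) (conj T1 T2)) H1) as [Heq Hsh].
    apply subst_case; auto.
    + intros X v E. unfold th in E. rewrite lookup_restrict in E.
      destruct in_dec; [|discriminate]. eapply Hsh; eauto.
    + unfold th. rewrite (app_ext _ phi (Flex F xs)), (app_ext _ phi u); auto.
      * intros X HX. rewrite lookup_restrict. destruct in_dec; auto. exfalso; apply n; right; auto.
      * intros X HX. rewrite lookup_restrict. destruct in_dec; auto. exfalso; apply n.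
        simpl in HX. destruct HX as [<-|[]]; left; auto.
Qed.
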